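(* Let $S_1,\ldots,S_k$ be measurable subsets of $[0,\infty)$ with positive Lebesgue measure, ordered in the sense that for any $x\in S_i$ and $y\in S_j$ with $i<j$, $x<y$ holds almost surely. Let $w$ be a measurable function that does not change its sign inside each $S_j$, and assume $\int_{S_j}w(x)\,dx\ne0$ for each $j$ (all integrals below being finite). Then the $k\times k$ matrix $\mathrm M$ with entries $\mathrm M_{ij}=\int_{S_j}w(x)x^{2(i-1)}\,dx$, $i,j=1,\ldots,k$, is non-singular. *)

(* Defs.v *)
From HB Require Import structures.
From mathcomp Require Import all_boot all_order all_algebra.
From mathcomp Require Import all_classical all_reals all_analysis.
Set Implicit Arguments. Unset Strict Implicit. Unset Printing Implicit Defensive.
Import Order.TTheory GRing.Theory Num.Theory.
Import numFieldNormedType.Exports.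

(* Main.v *)
Require Import Defs.
From HB Require Import structures.
From mathcomp Require Import all_boot all_order all_algebra.
From mathcomp Require Import all_classical all_reals all_analysis.
From mathcomp Require Import polyrcf measurable_realfun.
Import Order.TTheory GRing.Theory Num.Theory.
Import numFieldNormedType.Exports.
Local Open Scope classical_set_scope.
Local Open Scope ring_scope.
Set Implicit Arguments. Unset Strict Implicit. Unset Printing Implicit Defensive.
Section PartA.
Variable R : realType.
Local Notation mu := (@lebesgue_measure R).

Lemma aeS (P Q : set R) : (forall x, P x -> Q x) ->
  {ae mu, forall x, P x} -> {ae mu, forall x, Q x}.
Proof. move=> PQ; exact: (@filterS _ _ (ae_filter_ringOfSetsType mu) P Q PQ). Qed.

Lemma ae_pick (B P : set R) : ~ mu.-negligible B -> {ae mu, forall x, P x} ->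
  exists x, B x /\ P x.
Proof.
move=> nB aP; apply: contrapT => hne; apply: nB.
apply: negligibleS aP => x Bx Px; apply: hne; by exists x.
Qed.

Lemma ae_forall_lt (Q : nat -> R -> Prop) m :
  (forall j, (j < m)%N -> {ae mu, forall x, Q j x}) ->
  {ae mu, forall x, forall j, (j < m)%N -> Q j x}.
Proof.
elim: m => [|m IH] H.
  by apply: aeW => x j.
have H1 := IH (fun j hj => H j (ltnW hj)).
have H2 := H m (ltnSn m).
apply: (filterS2 (ae_filter_ringOfSetsType mu) _ H1 H2) => x h1 h2 j; rewrite ltnS leq_eqVlt => /orP[/eqP->//|].
exact: h1.
Qed.

Lemma choose_pts (n : nat) : forall (B : nat -> set R) (r : nat -> nat -> bool),
 (forall i, (i < n)%N -> ~ mu.-negligible (B i)) ->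
 (forall i j, (i < j)%N -> (j < n)%N -> r i j ->
    {ae mu, forall x, B i x -> {ae mu, forall y, B j y -> x < y}}) ->
 exists z : nat -> R, (forall i, (i < n)%N -> B i (z i)) /\
   (forall i j, (i < j)%N -> (j < n)%N -> r i j -> z i < z j).
Proof.
elim: n => [|n IH] B r hB hr.
  by exists (fun=> 0); split => // i j _; rewrite ltn0.
have hall : {ae mu, forall x, forall j, (j < n.+1)%N ->
    (0 < j)%N && r 0%N j -> (B 0%N x -> {ae mu, forall y, B j y -> x < y})}.
  apply: ae_forall_lt => j hj.
  case: (boolP ((0 < j)%N && r 0%N j)) => [/andP[j0 rj]|_].
    by apply: aeS (hr _ _ j0 hj rj) => x h _.
  by apply: aeW.
have [z0 [Bz0 Pz0]] := ae_pick (hB 0%N isT) hall.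
pose B' j := B j.+1 `&` [set y | r 0%N j.+1 -> z0 < y].
pose r' i j := r i.+1 j.+1.
have hB' : forall i, (i < n)%N -> ~ mu.-negligible (B' i).
  move=> i hi nB; apply: (hB i.+1 hi).
  case: (boolP (r 0%N i.+1)) => ri.
    have := Pz0 i.+1 hi; rewrite ri /= => /(_ isT Bz0) hy.
    apply: negligibleS (negligibleU nB hy) => y By.
    case: (pselect (z0 < y)) => h; first by left; split => // _.
    by right => /(_ By).
  apply: negligibleS nB => y By; split => // h; by rewrite h in ri.
have hr' : forall i j, (i < j)%N -> (j < n)%N -> r' i j ->
    {ae mu, forall x, B' i x -> {ae mu, forall y, B' j y -> x < y}}.
  move=> i j ij jn rij.
  apply: aeS (hr i.+1 j.+1 ij jn rij) => x h [Bx _].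
  by apply: aeS (h Bx) => y hy [By _]; exact: hy.
have [z' [Bz' hz']] := IH B' r' hB' hr'.
exists (fun i => if i is i'.+1 then z' i' else z0); split.
  by case=> [|i] hi //; have [] := Bz' i hi.
case=> [|i] [|j] // ij jn rij.
  by have [_] := Bz' j jn; apply.
exact: hz'.
Qed.
End PartA.
From mathcomp Require Import lra.
Section PartB.
Variable R : realType.

Lemma sq_lt (x y : R) : 0 <= x -> x < y -> x ^+ 2 < y ^+ 2.
Proof. move=> x0 xy; rewrite !expr2; nra. Qed.

Lemma roots_contra (P : {poly R}) k (u v : nat -> R) :
 P != 0 -> (size P <= k)%N ->
 (forall j, (j < k)%N -> [/\ 0 <= u j, 0 <= v j, 0 < P.[u j ^+ 2] & P.[v j ^+ 2] < 0]) ->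
 (forall i j, (i < j)%N -> (j < k)%N ->
    [/\ u i < u j, u i < v j, v i < u j & v i < v j]) -> False.
Proof.
move=> P0 sP hj hij.
pose a j := Num.min (u j ^+ 2) (v j ^+ 2).
pose b j := Num.max (u j ^+ 2) (v j ^+ 2).
have ex : forall j, exists t, (j < k)%N -> root P t /\ a j < t < b j.
  move=> j; case: (ltnP j k) => jk; last by exists 0.
  have [u0 v0 pu pv] := hj j jk.
  have ab : a j <= b j by rewrite /a /b; case: (leP (u j ^+ 2) (v j ^+ 2)) => h //; exact: ltW.
  have pab : P.[a j] * P.[b j] < 0.
    rewrite /a /b; case: (leP (u j ^+ 2) (v j ^+ 2)) => h.
      by rewrite pmulr_rlt0.
    by rewrite nmulr_rlt0.
  have [t tab rt] := poly_ivtoo ab pab.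
  exists t => _; split => //.
have [t ht] := choice ex.
have tinc : forall i j, (i < j)%N -> (j < k)%N -> t i < t j.
  move=> i j ij jk.
  have ik : (i < k)%N by apply: ltn_trans ij jk.
  have [_ /andP[_ ti]] := ht i ik.
  have [_ /andP[tj _]] := ht j jk.
  have [ui vi _ _] := hj i ik.
  have [h1 h2 h3 h4] := hij i j ij jk.
  have : b i < a j.
    rewrite /a /b gt_max !lt_min.
    by rewrite !sq_lt.
  move=> bij; apply: lt_trans ti _; exact: lt_trans bij tj.
have := max_poly_roots (rs := mkseq t k) P0.
rewrite size_mkseq.
have -> : all (root P) (mkseq t k).
  apply/allP => x /mapP [j]; rewrite mem_iota add0n => /andP[_ jk] ->.
  by have [] := ht j jk.
have -> : uniq (mkseq t k).
  apply/mkseq_uniqP => i j; rewrite !inE /= => ik jk tij.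
  case: (ltngtP i j) => // h.
    by have := tinc i j h jk; rewrite tij ltxx.
  by have := tinc j i h ik; rewrite tij ltxx.
move=> /(_ isT isT) h; have := leq_ltn_trans sP h; by rewrite ltnn.
Qed.
End PartB.
Section PartD.
Variable R : realType.
Local Notation mu := (@lebesgue_measure R).


Lemma core_ae (S : set R) (w q : R -> R) : measurable S ->
  measurable_fun setT w -> measurable_fun setT q ->
  (forall x, S x -> (0 <= w x)%R) ->
  mu.-integrable S (fun x => (w x * q x)%:E) ->
  (\int[mu]_(x in S) (w x * q x)%:E = 0)%E ->
  mu.-negligible (S `&` [set x | (0 < q x)%R]) ->
  mu.-negligible [set x | q x = 0%R] ->
  ae_eq mu S (fun x => (w x)%:E) (cst 0%E).
Proof.
move=> mS mw mq w0 ig i0 nP nZ.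
have mwS : measurable_fun S w by exact: measurable_funS mw.
have mqS : measurable_fun S q by exact: measurable_funS mq.
have mg : measurable_fun S (fun x => (w x * q x)%:E).
  by apply/measurable_EFinP; exact: measurable_funM.
have h1 : (\int[mu]_(x in S) abse ((w x * q x)%:E) = 0)%E.
  transitivity (\int[mu]_(x in S) ((-1)%:E * (w x * q x)%:E))%E.
    apply: ae_eq_integral => //.
    - by apply: measurableT_comp => //.
    - by apply: measurable_funeM.
    apply: negligibleS nP => x /= hx; apply: contrapT => hq.
    apply: hx => Sx; have : q x <= 0 by rewrite leNgt; apply/negP => h; apply: hq.
    move=> qx; rewrite /= -EFinM mulN1r ler0_norm //.
    by rewrite mulr_ge0_le0 // w0.
  by rewrite integralZl // i0 mule0.
have /(ae_eq_integral_abs mu mS mg) h2 := h1.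
  have nZ' : {ae mu, forall x, q x != 0}.
    by apply: negligibleS nZ => x /= /negP; rewrite negbK => /eqP.
  apply: (filterS2 (ae_filter_ringOfSetsType mu) _ h2 nZ') => x hx qx Sx.
  have := hx Sx; rewrite /= => /eqP; rewrite eqe mulf_eq0 (negbTE qx) orbF.
  by move/eqP ->.
Qed.

Lemma neg_int (S : set R) (f : R -> R) : measurable S ->
  mu.-integrable S (fun x => (f x)%:E) -> (\int[mu]_(x in S) (f x)%:E = 0)%E ->
  mu.-integrable S (fun x => (- f x)%:E) /\ (\int[mu]_(x in S) (- f x)%:E = 0)%E.
Proof.
move=> mS fi f0.
have -> : (fun x => (- f x)%:E) = (fun x => ((-1)%:E * (f x)%:E)%E).
  by apply/funext => x; rewrite -EFinM mulN1r.
split; first exact: integrableZl.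
by rewrite integralZl // f0 mule0.
Qed.

Lemma two_sided (S : set R) (w q : R -> R) : measurable S ->
  measurable_fun setT w -> measurable_fun setT q ->
  ((forall x, S x -> 0 <= w x) \/ (forall x, S x -> w x <= 0)) ->
  mu.-integrable S (fun x => (w x * q x)%:E) ->
  (\int[mu]_(x in S) (w x * q x)%:E = 0)%E ->
  Rintegral mu S w != 0 ->
  mu.-negligible [set x | q x = 0] ->
  ~ mu.-negligible (S `&` [set x | 0 < q x]) /\
  ~ mu.-negligible (S `&` [set x | q x < 0]).
Proof.
move=> mS mw mq ws wqi wq0 wne nZ.
have fin : ae_eq mu S (fun x => (w x)%:E) (cst 0%E) -> False.
  move=> hae; move/negP: wne; apply; apply/eqP.
  rewrite /Rintegral (ae_eq_integral (cst 0%E)) //.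
  - by rewrite integral0.
  - by apply/measurable_EFinP; exact: measurable_funS mw.
have finN : ae_eq mu S (fun x => (- w x)%:E) (cst 0%E) -> False.
  move=> hae; apply: fin; apply: aeS hae => x h Sx.
  by have := h Sx => /= -[] /eqP; rewrite oppr_eq0 => /eqP ->.
have mNw : measurable_fun setT (fun x => - w x) by exact: measurable_funN.
have mNq : measurable_fun setT (fun x => - q x) by exact: measurable_funN.
have nZN : mu.-negligible [set x | - q x = 0].
  by apply: negligibleS nZ => x /= /eqP; rewrite oppr_eq0 => /eqP.
have [Nwi Nw0] := neg_int mS wqi wq0.
have negS : mu.-negligible (S `&` [set x | q x < 0]) ->
    mu.-negligible (S `&` [set x | 0 < - q x]).
  by apply: negligibleS => x [Sx /=]; rewrite oppr_gt0.
case: ws => ws; split => nS.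
- exact: fin (core_ae mS mw mq ws wqi wq0 nS nZ).
- apply: fin (core_ae mS mw mNq ws _ _ (negS nS) nZN).
    by under eq_fun do rewrite mulrN.
  by under eq_integral do rewrite mulrN.
- apply: finN (core_ae mS mNw mq _ _ _ nS nZ).
  + by move=> x Sx; rewrite oppr_ge0 ws.
  + by under eq_fun do rewrite mulNr.
  + by under eq_integral do rewrite mulNr.
- apply: finN (core_ae mS mNw mNq _ _ _ (negS nS) nZN).
  + by move=> x Sx; rewrite oppr_ge0 ws.
  + by under eq_fun do rewrite mulrNN.
  + by under eq_integral do rewrite mulrNN.
Qed.
End PartD.
Section PartE.
Variable R : realType.
Local Notation mu := (@lebesgue_measure R).

Lemma Rint_EFin (S : set R) (f : R -> R) : measurable S ->
  mu.-integrable S (fun x => (f x)%:E) ->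
  ((Rintegral mu S f)%:E = \int[mu]_(x in S) (f x)%:E)%E.
Proof. by move=> mS fi; rewrite /Rintegral fineK // integrable_fin_num. Qed.

Lemma lin_comb (S : set R) (w : R -> R) k (c : 'I_k -> R) : measurable S ->
  (forall i : 'I_k, mu.-integrable S (fun x => (w x * x ^+ (2 * i))%:E)) ->
  mu.-integrable S (fun x => (w x * \sum_(i < k) c i * x ^+ (2 * i))%:E) /\
  (\int[mu]_(x in S) (w x * \sum_(i < k) c i * x ^+ (2 * i))%:E =
    (\sum_(i < k) c i * Rintegral mu S (fun x => w x * x ^+ (2 * i)))%:E)%E.
Proof.
move=> mS hi.
have e : (fun x => (w x * \sum_(i < k) c i * x ^+ (2 * i))%:E) =
    (fun x => \sum_(i < k) ((c i)%:E * (w x * x ^+ (2 * i))%:E))%E.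
  apply/funext => x; rewrite sumEFin mulr_sumr; congr (_%:E).
  by apply: eq_bigr => i _; rewrite mulrCA.
rewrite e; split.
  by apply: integrable_sum => // i _; exact: integrableZl.
rewrite integral_sum //; last by move=> i; exact: integrableZl.
rewrite -sumEFin; apply: eq_bigr => i _.
by rewrite integralZl // -Rint_EFin // EFinM.
Qed.
End PartE.

Unset Implicit Arguments.
Local Open Scope classical_set_scope.
Local Open Scope ring_scope.

Theorem lemmaB1 (R : realType) (k : nat) (S : 'I_k -> set R) (w : R -> R) :
  (forall j, measurable (S j)) ->
  (forall j, S j `<=` `[0, +oo[%classic) ->
  (forall j, (0 < (@lebesgue_measure R) (S j))%E) ->
  (forall i j : 'I_k, (i < j)%N ->
     {ae (@lebesgue_measure R), forall x, S i x ->
        {ae (@lebesgue_measure R), forall y, S j y -> x < y}}) ->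
  measurable_fun setT w ->
  (forall j, (forall x, S j x -> 0 <= w x) \/ (forall x, S j x -> w x <= 0)) ->
  (forall (i j : 'I_k),
     (@lebesgue_measure R).-integrable (S j) (fun x => (w x * x ^+ (2 * i))%:E)) ->
  (forall j, Rintegral (@lebesgue_measure R) (S j) w != 0) ->
  (\matrix_(i < k, j < k)
      Rintegral (@lebesgue_measure R) (S j) (fun x => w x * x ^+ (2 * i)))
    \in unitmx.
Proof.
move=> mS Spos _ hord mw wsign hint hnz.
set M := \matrix_(i < k, j < k) _.
apply: contrapT => hM.
have [c [cM c0]] : exists c : 'rV[R]_k, c *m M = 0 /\ c != 0.
  apply: contrapT => H; apply: hM; rewrite -row_free_unit.
  apply: inj_row_free => v vM; apply: contrapT => v0; apply: H.
  by exists v; split => //; exact/eqP.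
pose E (n : nat) : R := oapp (fun j => c 0 j) 0 (insub n).
have EE : forall i : 'I_k, E i = c 0 i by move=> i; rewrite /E valK.
pose P : {poly R} := \poly_(i < k) E i.
pose p x := P.[x ^+ 2].
have hp : forall x, p x = \sum_(i < k) c 0 i * x ^+ (2 * i).
  by move=> x; rewrite /p horner_poly; apply: eq_bigr => i _; rewrite EE exprM.
have P0 : P != 0.
  apply: contra c0 => /eqP P0; apply/eqP/rowP => i; rewrite !mxE.
  have := congr1 (fun q : {poly R} => q`_i) P0.
  by rewrite /P coef_poly coef0 ltn_ord EE.
have mp : measurable_fun setT p.
  by apply: measurableT_comp; [exact: measurable_poly|exact: exprn_measurable].
have nZ : (@lebesgue_measure R).-negligible [set x | p x = 0].
  have mZ : measurable [set x | p x = 0].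
    by have := mp measurableT [set 0] (measurable_set1 0); rewrite setTI.
  apply/negligibleP => //; apply: countable_lebesgue_measure0.
  apply: finite_set_countable.
  pose rs := rootsR P.
  apply: (@sub_finite_set _ _ [set` (map Num.sqrt rs ++ map (fun r => - Num.sqrt r) rs)]);
    last exact: finite_seq.
  move=> x /= px0.
  have hr : x ^+ 2 \in rs.
    by rewrite -(roots_on_rootsR P0) in_itv /=; apply/rootP.
  rewrite mem_cat; have [x0|x0] := leP 0 x.
    by apply/orP; left; rewrite -(ger0_norm x0) -sqrtr_sqr map_f.
  apply/orP; right; rewrite -[x]opprK -(ltr0_norm x0) -sqrtr_sqr.
  by rewrite (map_f (fun r => - Num.sqrt r)).
have Hj : forall j : 'I_k,
    ~ (@lebesgue_measure R).-negligible (S j `&` [set x | 0 < p x]) /\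
    ~ (@lebesgue_measure R).-negligible (S j `&` [set x | p x < 0]).
  move=> j; have [ii e] := lin_comb (c 0) (mS j) (fun i => hint i j).
  have ep : (fun x => (w x * p x)%:E) =
      (fun x => (w x * \sum_(i < k) c 0 i * x ^+ (2 * i))%:E).
    by apply/funext => x; rewrite hp.
  apply: (two_sided (mS j) mw mp (wsign j) _ _ (hnz j) nZ).
  - by under eq_fun do rewrite hp.
  - under eq_integral do rewrite hp.
    rewrite e; congr (_%:E).
    transitivity ((c *m M) 0 j); last by rewrite cM mxE.
    by rewrite !mxE; apply: eq_bigr => i _; rewrite /M !mxE.
pose S' (n : nat) : set R := oapp S set0 (insub n).
have S'E : forall (n : nat) (hn : (n < k)%N), S' n = S (Ordinal hn).
  by move=> n hn; rewrite /S' insubT.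
pose B (m : nat) : set R :=
  S' m./2 `&` (if odd m then [set x | p x < 0] else [set x | 0 < p x]).
pose r (i j : nat) := (i./2 < j./2)%N.
have hB : forall i, (i < k.*2)%N -> ~ (@lebesgue_measure R).-negligible (B i).
  move=> i hi; have hi2 : (i./2 < k)%N by rewrite ltn_half_double.
  have [h1 h2] := Hj (Ordinal hi2).
  by rewrite /B (S'E _ hi2); case: (odd i).
have hr : forall i j, (i < j)%N -> (j < k.*2)%N -> r i j ->
    {ae (@lebesgue_measure R), forall x, B i x ->
      {ae (@lebesgue_measure R), forall y, B j y -> x < y}}.
  move=> i j ij jk rij.
  have hj2 : (j./2 < k)%N by rewrite ltn_half_double.
  have hi2 : (i./2 < k)%N by apply: ltn_trans rij hj2.
  have := hord (Ordinal hi2) (Ordinal hj2) rij.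
  apply: aeS => x h [Bx _]; rewrite (S'E _ hi2) in Bx.
  by apply: aeS (h Bx) => y hy [By _]; rewrite (S'E _ hj2) in By; exact: hy.
have [z [Bz hz]] := choose_pts hB hr.
have hd n : (n.*2)./2 = n by exact: doubleK.
have hd1 n : (n.*2.+1)./2 = n by rewrite -add1n (half_bit_double n true).
apply: (roots_contra (u := fun j => z j.*2) (v := fun j => z j.*2.+1) P0 (size_poly k E)).
  move=> j jk.
  have j2 : (j.*2 < k.*2)%N by rewrite ltn_double.
  have j21 : (j.*2.+1 < k.*2)%N by rewrite -ltn_half_double hd1.
  have := Bz _ j2; have := Bz _ j21.
  rewrite /B hd hd1 (S'E _ jk) odd_double /= => -[S1 n1] [S2 p2].
  have := Spos _ _ S1; have := Spos _ _ S2; rewrite /= !in_itv /= !andbT => g2 g1.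
  split; [exact: g2|exact: g1|exact: p2|by move: n1; rewrite odd_double].
move=> i j ij jk.
have i2 : forall a b, (a < k.*2)%N -> (b < k.*2)%N -> a./2 = i -> b./2 = j ->
    z a < z b.
  move=> a b ak bk ai bj; apply: hz => //; last by rewrite /r ai bj.
  rewrite -ltn_half_double in ak; rewrite -ltn_half_double in bk.
  apply: contraTT ij; rewrite -!leqNgt -ai -bj => ba.
  by apply: half_leq.
have j2 : (j.*2 < k.*2)%N by rewrite ltn_double.
have j21 : (j.*2.+1 < k.*2)%N by rewrite -ltn_half_double hd1.
have i2' : (i.*2 < k.*2)%N by rewrite ltn_double (ltn_trans ij).
have i21 : (i.*2.+1 < k.*2)%N by rewrite -ltn_half_double hd1 (ltn_trans ij).
by split; apply: i2.
Qed.
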